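(* Let $X$ be a metrizable vector space over $K$ with metric $d_X$, and let $Y$ be a Banach space over $K$ with $d_Y$ the metric induced by its norm. Then $B_d(X,Y)$ is a Banach space with norm $\|F\|_{B_d(X,Y)}=d(F,0)$.
   Context: $K$ is $\mathbb{R}$ or $\mathbb{C}$. For maps $F_1,F_2:X\to Y$, $d(F_1,F_2)=\max\left\{\sup_{x\neq0,x\in X}\frac{\|F_1(x)-F_2(x)\|_Y}{d_X(x,0)},\ \|F_1(0)-F_2(0)\|_Y\right\}\in[0,\infty]$, and $B_d(X,Y)$ is the set of maps $F:X\to Y$ with $d(F,0)<\infty$, with pointwise vector operations. *)

(* Defs.v *)
From HB Require Import structures.
From mathcomp Require Import all_boot all_order all_algebra.
From mathcomp Require Import all_classical all_reals all_analysis.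
From mathcomp Require Export complex.
Set Implicit Arguments. Unset Strict Implicit. Unset Printing Implicit Defensive.
Import Order.TTheory GRing.Theory Num.Theory.
Import numFieldNormedType.Exports.
Local Open Scope classical_set_scope.
Local Open Scope ring_scope.

Section Defs.
Variable R : realType.

Definition is_metric (T : Type) (d : T -> T -> R) : Prop :=
  (forall x y, d x y = 0 <-> x = y) /\
  (forall x y, d x y = d y x) /\
  (forall x y z, d x z <= d x y + d y z).

Definition metric_induces_topology (T : topologicalType) (d : T -> T -> R)
  : Prop :=
  forall (x : T) (A : set T),
    nbhs x A <-> exists2 e : R, 0 < e & forall y, d x y < e -> A y.

Variable K : numFieldType.
(** [nK] reads the (real) value of a norm [`|_| : K] as an element of [R]:
    the identity when K = R, the real part when K = R[i]. *)
Variable nK : K -> R.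
Variables (X : lmodType K) (Y : normedModType K) (dX : X -> X -> R).

Definition dmap (F1 F2 : X -> Y) : \bar R :=
  maxe (ereal_sup [set ((nK `|F1 x - F2 x|) / dX x 0)%:E | x in [set x : X | x != 0]])
       (nK `|F1 0 - F2 0|)%:E.

Definition Bd : set (X -> Y) := [set F | (dmap F (fun _ => 0%R) < +oo)%E].

Definition Bd_norm (F : X -> Y) : R := fine (dmap F (fun _ => 0)).

Definition Bd_is_Banach : Prop :=
  [/\ Bd (fun _ => 0),
      (forall F G, Bd F -> Bd G -> Bd (fun x => F x + G x)) &
      (forall (a : K) F, Bd F -> Bd (fun x => a *: F x))] /\
  [/\ (forall F, Bd F -> 0 <= Bd_norm F),
      (forall F, Bd F -> (Bd_norm F = 0 <-> F = (fun _ => 0))),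
      (forall (a : K) F, Bd F -> Bd_norm (fun x => a *: F x) = nK `|a| * Bd_norm F) &
      (forall F G, Bd F -> Bd G ->
         Bd_norm (fun x => F x + G x) <= Bd_norm F + Bd_norm G)] /\
  (forall u : nat -> X -> Y, (forall n, Bd (u n)) ->
     (forall e : R, 0 < e -> exists N, forall m n, (N <= m)%N -> (N <= n)%N ->
         Bd_norm (fun x => u m x - u n x) < e) ->
     exists2 F, Bd F & (fun n => Bd_norm (fun x => u n x - F x)) @ \oo --> (0 : R)).
End Defs.
Arguments Bd_is_Banach {R K} nK X Y dX.

(* Main.v *)
Require Import Defs.
From HB Require Import structures.
From mathcomp Require Import all_boot all_order all_algebra.
From mathcomp Require Import all_classical all_reals all_analysis.
From mathcomp Require Import complex.
Local Open Scope classical_set_scope.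
From mathcomp Require Import lra.
Import Order.TTheory GRing.Theory Num.Theory.
Import numFieldNormedType.Exports.
Local Open Scope ring_scope.

Set Implicit Arguments.
Section Gen.
Variables (R : realType) (K : numFieldType) (nK : K -> R) (X : lmodType K)
  (Y : normedModType K) (dX : X -> X -> R).
Hypothesis dXm : is_metric dX.
Local Notation ny y := (nK `|y|).
Hypotheses (ny_ge0 : forall y : Y, 0 <= ny y) (ny_eq0 : forall y : Y, ny y = 0 -> y = 0)
 (nyD : forall y z : Y, ny (y+z) <= ny y + ny z) (nyN : forall y : Y, ny (- y) = ny y)
 (nK0 : nK 0 = 0) (sK_ge0 : forall a : K, 0 <= nK `|a|) (nyZ : forall a (y : Y), ny (a *: y) = nK `|a| * ny y)
 (ny_complete : forall u : nat -> Y,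
    (forall e, 0 < e -> exists N, forall n, (N <= n)%N -> ny (u N - u n) < e) ->
    exists l, forall e, 0 < e -> exists N, forall n, (N <= n)%N -> ny (u n - l) < e).

Definition cw (x : X) : R := if x == 0 then 1 else dX x 0.

Lemma dX_gt0 x : x != 0 -> 0 < dX x 0.
Proof.
case: dXm => [H1 [H2 H3]] nx.
have h0 : dX x x = 0 by apply/H1.
have := H3 x 0 x; rewrite h0 (H2 0 x) => h.
rewrite lt_neqAle; apply/andP; split; last by lra.
apply/eqP => /esym /H1 /eqP; by rewrite (negbTE nx).
Qed.

Lemma cw_gt0 x : 0 < cw x.
Proof. rewrite /cw; case: eqP => [_|/eqP]; [exact: ltr01|exact: dX_gt0]. Qed.

Lemma L1 (F : X -> Y) : Bd nK dX F -> forall x, ny (F x) <= Bd_norm nK dX F * cw x.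
Proof.
rewrite /Bd /Bd_norm /= => HB x.
set D := dmap nK dX F (fun _ => 0).
have hm : ((ny (F 0 - 0))%:E <= D)%E by rewrite /D /dmap le_max lexx orbT.
have fin : D \is a fin_num.
  apply/fin_numPlt; rewrite HB andbT; exact: (lt_le_trans (ltNyr _) hm).
rewrite /cw; case: eqP => [->|/eqP nx].
  by rewrite mulr1; move: hm; rewrite -(fineK fin) lee_fin subr0.
have h2 : ((ny (F x - 0) / dX x 0)%:E <= D)%E.
  rewrite /D /dmap le_max; apply/orP; left.
  by apply: ereal_sup_ubound; exists x.
move: h2; rewrite -(fineK fin) lee_fin subr0 ler_pdivrMr //; exact: dX_gt0.
Qed.

Lemma L2 (F : X -> Y) M : (forall x, ny (F x) <= M * cw x) ->
  Bd nK dX F /\ Bd_norm nK dX F <= M.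
Proof.
move=> HM.
have M0 : 0 <= M by have := HM 0; rewrite /cw eqxx mulr1; apply: le_trans.
have hD : (dmap nK dX F (fun _ => 0%R) <= M%:E)%E.
  rewrite /dmap ge_max; apply/andP; split.
    apply: ge_ereal_sup => y /= [x nx <-]; rewrite lee_fin subr0 ler_pdivrMr; last exact: dX_gt0.
    by have := HM x; rewrite /cw (negbTE nx).
  by rewrite lee_fin subr0; have := HM 0; rewrite /cw eqxx mulr1.
have hm : ((ny (F 0 - 0))%:E <= dmap nK dX F (fun _ => 0%R))%E by rewrite /dmap le_max lexx orbT.
have fin : dmap nK dX F (fun _ => 0) \is a fin_num.
  apply/fin_numPlt; rewrite (lt_le_trans (ltNyr _) hm) /=; exact: (le_lt_trans hD (ltry _)).
split; first by rewrite /Bd /=; exact: (le_lt_trans hD (ltry _)).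
by rewrite /Bd_norm -lee_fin fineK.
Qed.

Lemma L3 (F : X -> Y) : Bd nK dX F -> 0 <= Bd_norm nK dX F.
Proof.
move=> HB; have := L1 HB 0; rewrite /cw eqxx mulr1; exact: le_trans.
Qed.

Arguments L2 {F M}.
Local Notation B := (Bd nK dX).
Local Notation NN := (Bd_norm nK dX).

Lemma BdB (F G : X -> Y) : B F -> B G -> B (fun x => F x - G x).
Proof.
move=> HF HG; apply: (proj1 (L2 (M := NN F + NN G) _)) => x.
apply: le_trans (nyD _ _) _; rewrite nyN mulrDl.
by apply: lerD; apply: L1.
Qed.

Theorem gen_banach : Bd_is_Banach nK X Y dX.
Proof.
split; [|split].
- split.
  + apply: (proj1 (L2 (M := 0) _)) => x; by rewrite normr0 nK0 mul0r.
  + move=> F G HF HG; apply: (proj1 (L2 (M := NN F + NN G) _)) => x.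
    apply: le_trans (nyD _ _) _; rewrite mulrDl.
    by apply: lerD; apply: L1.
  + move=> a F HF; apply: (proj1 (L2 (M := nK `|a| * NN F) _)) => x.
    rewrite nyZ -mulrA; apply: ler_wpM2l => //; exact: L1.
- split.
  + by move=> F; apply: L3.
  + move=> F HF; split.
      move=> H0; apply: funext => x; apply: ny_eq0; apply: le_anti.
      by rewrite ny_ge0 andbT; have := L1 HF x; rewrite H0 mul0r.
    move=> HF0; apply: le_anti; rewrite L3 // andbT.
    by apply: (proj2 (L2 (M := 0) _)) => x; rewrite HF0 normr0 nK0 mul0r.
  + move=> a F HF.
    have HaF : forall x, ny (a *: F x) <= nK `|a| * NN F * cw x.
      by move=> x; rewrite nyZ -mulrA; apply: ler_wpM2l => //; exact: L1.
    have [BaF leaF] := L2 HaF.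
    apply: le_anti; rewrite leaF /=.
    have [sa0|sa0] := eqVneq (nK `|a|) 0; first by rewrite sa0 mul0r L3.
    have sa : 0 < nK `|a| by rewrite lt_neqAle eq_sym sa0 sK_ge0.
    set t := NN (fun x => a *: F x) / nK `|a|.
    have tE : NN (fun x => a *: F x) = nK `|a| * t by rewrite /t mulrC divfK // gt_eqF.
    rewrite tE ler_pM2l //; apply: (proj2 (L2 _)) => x.
    have := L1 BaF x; rewrite tE nyZ -mulrA ler_pM2l //.
  + move=> F G HF HG; apply: (proj2 (L2 (M := NN F + NN G) _)) => x.
    apply: le_trans (nyD _ _) _; rewrite mulrDl.
    by apply: lerD; apply: L1.
move=> u Hu HC.
have pw : forall x, exists l, forall e, 0 < e -> exists N, forall n, (N <= n)%N -> ny (u n x - l) < e.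
  move=> x; apply: ny_complete => e e0.
  have [N HN] := HC (e / cw x) (divr_gt0 e0 (cw_gt0 x)).
  exists N => n Nn.
  apply: le_lt_trans (L1 (BdB (Hu N) (Hu n)) x) _.
  by rewrite -ltr_pdivlMr ?cw_gt0 //; apply: HN.
have [F HF] := choice pw.
have key : forall e, 0 < e -> exists N, forall m, (N <= m)%N -> forall x, ny (u m x - F x) <= e * cw x.
  move=> e e0; have [N HN] := HC e e0; exists N => m Nm x.
  apply/ler_addgt0Pr => d d0.
  have [N' HN'] := HF x d d0.
  pose n := maxn N N'.
  have -> : u m x - F x = (u m x - u n x) + (u n x - F x) by rewrite addrA subrK.
  apply: le_trans (nyD _ _) _; apply: lerD.
    apply: le_trans (L1 (BdB (Hu m) (Hu n)) x) _.
    rewrite ler_pM2r ?cw_gt0 //; apply/ltW/HN => //; exact: leq_maxl.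
  by apply/ltW/HN'; exact: leq_maxr.
have BF : B F.
  have [N HN] := key 1 ltr01.
  apply: (proj1 (L2 (M := NN (u N) + 1) _)) => x.
  have -> : F x = u N x + - (u N x - F x) by rewrite opprB addrC subrK.
  apply: le_trans (nyD _ _) _; rewrite nyN mulrDl.
  by apply: lerD; [apply: L1|apply: HN].
exists F => //.
apply/cvgrPdist_lt => eps eps0.
have [N HN] := key (eps / 2) (divr_gt0 eps0 (ltr0Sn _ 1)).
have bnd : forall n, (N <= n)%N -> B (fun x => u n x - F x) /\ NN (fun x => u n x - F x) <= eps / 2.
  by move=> n Nn; apply: L2 => x; apply: HN.
exists N => // n /= Nn.
have [Bn Ln] := bnd n Nn.
rewrite sub0r normrN ger0_norm; last exact: L3.
apply: le_lt_trans Ln _; rewrite ltr_pdivrMr // ; lra.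
Qed.

End Gen.
Lemma seq_complete (K : numFieldType) (Y : completeNormedModType K) (u : nat -> Y) :
 (forall e : K, 0 < e -> exists N, forall n, (N <= n)%N -> `|u N - u n| < e) ->
 exists l, forall e : K, 0 < e -> exists N, forall n, (N <= n)%N -> `|u n - l| < e.
Proof.
move=> HC.
have : cauchy (u @ \oo).
  apply: cauchy_exP => e e0; have [N HN] := HC e e0.
  exists (u N); exists N => // n /= Nn; rewrite -ball_normE /=; exact: HN.
move/cauchy_cvgP => cv; exists (lim (u @ \oo)) => e e0.
have [N _ HN] := (cvgrPdistC_lt _ _).1 cv e e0.
by exists N => n Nn; apply: HN.
Qed.

Lemma Re_ge0 (R : rcfType) (z : R[i]) : 0 <= z -> 0 <= complex.Re z.
Proof. rewrite lecE => /andP [_ h]. exact: h. Qed.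

Lemma ReM0 (R : rcfType) (p q : R[i]) : complex.Im p = 0 -> complex.Re (p * q) = complex.Re p * complex.Re q.
Proof. by case: p q => a b [c d] /= ->; rewrite mul0r subr0. Qed.

Lemma ReD (R : rcfType) (p q : R[i]) : complex.Re (p + q) = complex.Re p + complex.Re q.
Proof. by case: p q => a b [c d]. Qed.

Lemma realC (R : rcfType) (z : R[i]) : 0 <= z -> z = ((complex.Re z)%:C)%C.
Proof. by move=> /ger0_Im; case: z => a b /= ->. Qed.

Unset Implicit Arguments.
Theorem corollary11 (R : realType) :
  (forall (X : topologicalLmodType R) (dX : X -> X -> R)
          (Y : completeNormedModType R),
     is_metric dX -> metric_induces_topology dX ->
     Bd_is_Banach (fun r : R => r) X Y dX) /\
  (forall (X : topologicalLmodType R[i]) (dX : X -> X -> R)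
          (Y : completeNormedModType R[i]),
     is_metric dX -> metric_induces_topology dX ->
     Bd_is_Banach (@complex.Re R) X Y dX).
Proof.
split.
- move=> X dX Y dXm _.
  apply: (@gen_banach _ _ (fun r : R => r) X Y dX dXm) => /=.
  + by move=> y; exact: normr_ge0.
  + by move=> y /normr0_eq0.
  + by move=> y z; exact: ler_normD.
  + by move=> y; rewrite normrN.
  + by [].
  + by move=> a; exact: normr_ge0.
  + by move=> a y; rewrite normrZ.
  + by move=> u HC; exact: seq_complete.
- move=> X dX Y dXm _.
  apply: (@gen_banach _ _ (@complex.Re R) X Y dX dXm) => /=.
  + by move=> y; apply: Re_ge0.
  + move=> y h; apply/normr0_eq0.
    by rewrite (@realC _ _ (normr_ge0 y)) h.
  + move=> y z; have := ler_normD y z; rewrite lecE => /andP [_].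
    by rewrite ReD.
  + by move=> y; rewrite normrN.
  + by [].
  + by move=> a; exact: (@Re_ge0 _ _ (normr_ge0 a)).
  + by move=> a y; rewrite normrZ ReM0 // ger0_Im.
  + move=> u HC.
    have hc : forall e : R[i], 0 < e -> exists N, forall n, (N <= n)%N -> `|u N - u n| < e.
      move=> e; rewrite ltcE => /andP [/eqP im re0].
      have [N HN] := HC _ re0; exists N => n Nn.
      rewrite ltcE; apply/andP; split; last exact: HN.
      by rewrite im (ger0_Im (normr_ge0 _)).
    have [l Hl] := @seq_complete _ Y u hc.
    exists l => e e0.
    have ec : 0 < ((e%:C)%C : R[i]) by rewrite ltcR.
    have [N HN] := Hl _ ec.
    by exists N => n Nn; have := HN n Nn; rewrite ltcE => /andP [_].
Qed.
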